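(* Let $G=(V,E)$ be a finite simple graph and let $z:E\to[0,1]$ be any function. Then there is a function $x:E\to\{0,1\}$ such that for every vertex $v\in V$, $$\sum_{e\ni v}z(e)-1<\sum_{e\ni v}x(e)\le\sum_{e\ni v}z(e)+1,$$ where the sums range over the edges of $G$ incident with $v$. *)

(* Defs.v *)
From mathcomp Require Import all_boot all_order all_algebra.
Set Implicit Arguments. Unset Strict Implicit. Unset Printing Implicit Defensive.
Import Order.TTheory GRing.Theory Num.Theory.

Definition simple_graph (V : finType) (adj : rel V) : Prop :=
  symmetric adj /\ irreflexive adj.

Definition edges (V : finType) (adj : rel V) : {set {set V}} :=
  [set E : {set V} | [exists u, exists w, adj u w && (E == [set u; w])]].

(* Main.v *)
Require Import Defs.
From mathcomp Require Import all_boot all_order all_algebra.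
From mathcomp Require Import lra zify.
Set Implicit Arguments. Unset Strict Implicit. Unset Printing Implicit Defensive.
Import Order.TTheory GRing.Theory Num.Theory.
Local Open Scope ring_scope.

Definition Fr (R : realFieldType) (V : finType) (Es : {set {set V}})
  (z : {set V} -> R) : {set {set V}} := [set E in Es | (0 < z E) && (z E < 1)].
Definition Ssum (R : realFieldType) (V : finType) (Es : {set {set V}})
  (z : {set V} -> R) (v : V) : R := \sum_(E in Es | v \in E) z E.
Definition dg (R : realFieldType) (V : finType) (Es : {set {set V}})
  (z : {set V} -> R) (v : V) : nat := \big[addn/0%N]_(E in Fr Es z | v \in E) 1%N.
Definition Kf (R : realFieldType) (V : finType) (Es : {set {set V}})
  (z : {set V} -> R) (v : V) : nat :=
  \big[addn/0%N]_(E in Es | (v \in E) && (E \notin Fr Es z)) (z E == 1 : nat).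

Lemma int01 (R : realFieldType) (r : R) : 0 <= r <= 1 -> ~~ ((0 < r) && (r < 1)) ->
  r = (r == 1)%:R.
Proof.
case/andP=> h0 h1; case: eqP => [->//|/eqP ne1].
move=> h; have : ~~ (0 < r).
  by apply: contra h => ->; rewrite lt_neqAle ne1 h1.
rewrite -leNgt => h'.
by apply/eqP; rewrite eq_le h' h0.
Qed.

Lemma split_S (R : realFieldType) (V : finType) (Es : {set {set V}})
  (z z' : {set V} -> R) (v : V) :
  (forall E, E \in Es -> 0 <= z E <= 1) ->
  (forall E, E \notin Fr Es z -> z' E = z E) ->
  Ssum Es z' v = (Kf Es z v)%:R + \sum_(E in Fr Es z | v \in E) z' E.
Proof.
move=> hz hag; rewrite /Ssum (bigID (mem (Fr Es z))) /= addrC; congr (_ + _).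
- rewrite /Kf natr_sum; apply: eq_big => E; first by rewrite andbA.
  case/andP => /andP [hE hv] hF.
  rewrite hag //; apply: int01 (hz E hE) _.
  by move: hF; rewrite /Fr inE hE.
- apply: eq_bigl => E; rewrite /Fr !inE.
  by case: (E \in Es); case: (v \in E); rewrite /= ?andbT ?andbF.
Qed.

Lemma sum_weak (R : realFieldType) (T : finType) (P : pred T) (f : T -> R) :
  (forall i, P i -> 0 <= f i <= 1) ->
  0 <= \sum_(i | P i) f i <= (\big[addn/0%N]_(i | P i) 1%N)%:R.
Proof.
move=> hf; rewrite natr_sum; apply/andP; split.
  by apply: sumr_ge0 => i /hf /andP [].
by apply: ler_sum => i /hf /andP [].
Qed.

Lemma sum_strict (R : realFieldType) (T : finType) (P : pred T) (f : T -> R) :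
  (0 < \sum_(i | P i) 1%N)%N -> (forall i, P i -> 0 < f i < 1) ->
  0 < \sum_(i | P i) f i < (\big[addn/0%N]_(i | P i) 1%N)%:R.
Proof.
move=> hpos hf.
have hP : has P (index_enum T).
  by apply: contraTT hpos => h; rewrite big_hasC.
rewrite natr_sum; apply/andP; split.
  have h0 : \sum_(i | P i) (0:R) = 0 by rewrite big1_eq.
  rewrite -[X in X < _]h0.
  by apply: ltr_sum => // i /hf /andP [].
by apply: ltr_sum => // i /hf /andP [].
Qed.

Lemma vertex_ok (R : realFieldType) (V : finType) (Es : {set {set V}})
  (z z' : {set V} -> R) (a : nat) (v : V) :
  (forall E, E \in Es -> 0 <= z E <= 1) ->
  (forall E, E \in Es -> 0 <= z' E <= 1) ->
  (forall E, E \notin Fr Es z -> z' E = z E) ->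
  a%:R <= Ssum Es z v <= a%:R + 1 ->
  [\/ Ssum Es z' v = Ssum Es z v, (dg Es z v <= 1)%N |
      dg Es z v = 2%N /\ (if (a <= Kf Es z v)%N then Ssum Es z' v <= Ssum Es z v
                         else Ssum Es z v <= Ssum Es z' v)] ->
  a%:R <= Ssum Es z' v <= a%:R + 1.
Proof.
move=> hz hz' hag ha hcase.
pose P := fun E => (E \in Fr Es z) && (v \in E).
pose c := \sum_(E | P E) z E.
pose c' := \sum_(E | P E) z' E.
pose K := Kf Es z v.
have hS : Ssum Es z v = K%:R + c by rewrite (split_S v hz (fun _ _ => erefl)).
have hS' : Ssum Es z' v = K%:R + c' by rewrite (split_S v hz hag).
have hw : 0 <= c' <= (dg Es z v)%:R.
  apply: sum_weak => E; rewrite /P inE => /andP [/andP [hE _] _]; exact: hz'.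
have hs : (0 < dg Es z v)%N -> 0 < c < (dg Es z v)%:R.
  move=> hd; apply: sum_strict => // E; rewrite /P inE => /andP [/andP [_ ->] _].
  done.
have hw0 : 0 <= c <= (dg Es z v)%:R.
  apply: sum_weak => E; rewrite /P inE => /andP [/andP [hE _] _]; exact: hz.
rewrite -/K in hcase; clearbody c c' K.
move: hcase ha; rewrite hS hS' => -[->//| hd | [hd hdir]] /andP [h1 h2].
- move: hd; rewrite leq_eqVlt ltnS leqn0 => /orP [/eqP hd | /eqP hd]; last first.
    move: hw hw0; rewrite hd => /andP [w1 w2] /andP [w3 w4].
    have -> : c' = c by lra.
    by rewrite h1 h2.
  move: hw (hs (ltac:(by rewrite hd))); rewrite hd => /andP [w1 w2] /andP [s1 s2].
  clear hS hS' hs hz hz' hag hd P.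
  have e1 : (a < K.+1)%N by rewrite -(ltr_nat R) -natr1; lra.
  have e2 : (K < a.+1)%N by rewrite -(ltr_nat R) -natr1; lra.
  have eK : a = K by move: e1 e2; rewrite !ltnS => e1 e2; apply/eqP; rewrite eqn_leq e1 e2.
  rewrite eK; apply/andP; split; lra.
- move: hw hdir; rewrite hd => /andP [w1 w2].
  clear hS hS' hs hz hz' hag hd P.
  case: leqP => hK hdir.
    have : a%:R <= K%:R :> R by rewrite ler_nat.
    move=> hK'; apply/andP; split; lra.
  have : K%:R + 1 <= a%:R :> R by rewrite natr1 ler_nat.
  move=> hK'; apply/andP; split; lra.
Qed.
Lemma kernel_vec (R : fieldType) (I J : finType) (A : {set I}) (B : {set J})
  (M : I -> J -> R) : (#|B| < #|A|)%N ->
  exists u : I -> R, [/\ forall i, i \notin A -> u i = 0,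
     exists2 i, i \in A & u i != 0 &
     forall j, j \in B -> \sum_(i in A) u i * M i j = 0].
Proof.
move=> hlt.
pose Mx : 'M[R]_(#|A|, #|B|) := \matrix_(k, l) M (enum_val k) (enum_val l).
have rk : (0 < \rank (kermx Mx))%N.
  by rewrite mxrank_ker subn_gt0; apply: leq_ltn_trans (rank_leq_col Mx) hlt.
have [r hr] : exists r, row r (kermx Mx) != 0.
  apply/existsP; apply: contraTT rk; rewrite negb_exists => /forallP H.
  rewrite lt0n negbK mxrank_eq0; apply/eqP/row_matrixP => i.
  by rewrite row0; apply/eqP; move: (H i); rewrite negbK.
pose w := row r (kermx Mx).
have hw : w *m Mx = 0 by rewrite /w -row_mul mulmx_ker row0.
have [k0 hk0] : exists k0, w 0 k0 != 0.
  apply/existsP; apply: contraTT hr; rewrite negb_exists => /forallP H.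
  rewrite negbK; apply/eqP/rowP => k; rewrite [RHS]mxE; apply/eqP.
  by move: (H k); rewrite negbK.
pose u i := \sum_(k < #|A| | enum_val k == i) w 0 k.
exists u; split.
- move=> i hi; rewrite /u big_pred0 // => k; apply/negP => /eqP ek.
  by move: (enum_valP k); rewrite ek (negbTE hi).
- exists (enum_val k0); first exact: enum_valP.
  rewrite /u (big_pred1 k0) // => k /=; exact: (inj_eq enum_val_inj).
- move=> j hj.
  have := congr1 (fun m : 'rV_#|B| => m 0 (enum_rank_in hj j)) hw.
  rewrite !mxE => H.
  have H' : \sum_k w 0 k * M (enum_val k) j = 0.
    rewrite -[RHS]H; apply: eq_bigr => k _; by rewrite /Mx !mxE enum_rankK_in.
  rewrite -[RHS]H'.
  rewrite (partition_big (fun k => enum_val k) (mem A)) /=; last by move=> k _; exact: enum_valP.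
  apply: eq_bigr => i hi; rewrite /u big_distrl /=; apply: eq_bigr => k /eqP <-; done.
Qed.

Lemma move_lemma (R : realFieldType) (V : finType) (Es : {set {set V}})
  (z d : {set V} -> R) :
  (forall E, E \in Es -> 0 <= z E <= 1) ->
  (forall E, E \notin Fr Es z -> d E = 0) ->
  (exists2 E, E \in Fr Es z & d E != 0) ->
  exists t : R, [/\ 0 < t, forall E, E \in Es -> 0 <= z E + t * d E <= 1 &
    exists2 E, E \in Fr Es z & (z E + t * d E == 0) || (z E + t * d E == 1)].
Proof.
move=> hz hd [E0 hE0 hdE0].
pose G := [set E in Fr Es z | d E != 0].
pose tau E := if 0 < d E then (1 - z E) / d E else z E / (- d E).
have hG0 : E0 \in G by rewrite inE hE0 hdE0.
have htau : forall E, E \in G -> 0 < tau E.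
  move=> E; rewrite !inE => /andP [/andP [_ /andP [z0 z1]] dn0].
  rewrite /tau; case: ifP => hpos.
    by apply: divr_gt0 => //; rewrite subr_gt0.
  apply: divr_gt0 => //; rewrite oppr_gt0 lt_neqAle dn0 /=.
  by rewrite leNgt hpos.
case: (arg_minP tau hG0) => Em hEm hmin.
exists (tau Em); split.
- exact: htau.
- move=> E hE.
  have [hEG|hEG] := boolP (E \in G); last first.
    have -> : d E = 0.
      case: (boolP (E \in Fr Es z)) => hF; last exact: hd.
      by apply/eqP; move: hEG; rewrite inE hF /= negbK.
    by rewrite mulr0 addr0; apply: hz.
  have ht := hmin E hEG; have ht0 := htau Em hEm.
  move: hEG; rewrite !inE => /andP [/andP [_ /andP [z0 z1]] dn0].
  have htE : tau E = (if 0 < d E then (1 - z E) / d E else z E / (- d E)) by [].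
  move: ht; rewrite htE; case: ifP => hpos ht.
    rewrite ler_pdivlMr // in ht.
    have : 0 < tau Em * d E by apply: mulr_gt0.
    move=> hp; apply/andP; split; lra.
  have hneg : 0 < - d E by rewrite oppr_gt0 lt_neqAle dn0 /= leNgt hpos.
  rewrite ler_pdivlMr // in ht.
  have : 0 < tau Em * - d E by apply: mulr_gt0.
  move=> hp; apply/andP; split; lra.
- exists Em; first by case/setIdP: hEm.
  case/setIdP: hEm => _ dn0.
  rewrite /tau; case: ifP => hpos.
    by rewrite divfK // subrKC eqxx orbT.
  by rewrite invrN mulrN mulNr divfK // subrr eqxx.
Qed.

Lemma sum_supp (R : realFieldType) (V : finType) (Es : {set {set V}})
  (z f : {set V} -> R) (v : V) :
  (forall E, E \notin Fr Es z -> f E = 0) ->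
  \sum_(E in Es | v \in E) f E = \sum_(E in Fr Es z | v \in E) f E.
Proof.
move=> hf; rewrite (bigID (mem (Fr Es z))) /= [X in _ + X]big1 ?addr0.
  apply: eq_bigl => E; rewrite /Fr !inE.
  by case: (E \in Es); case: (v \in E); rewrite /= ?andbT ?andbF.
by move=> E /andP [_ h]; exact: hf.
Qed.

Lemma finish (R : realFieldType) (V : finType) (Es : {set {set V}})
  (z d : {set V} -> R) (a : V -> nat) :
  (forall E, E \in Es -> 0 <= z E <= 1) ->
  (forall v, (a v)%:R <= Ssum Es z v <= (a v)%:R + 1) ->
  (forall E, E \notin Fr Es z -> d E = 0) ->
  (exists2 E, E \in Fr Es z & d E != 0) ->
  (forall v, [\/ \sum_(E in Fr Es z | v \in E) d E = 0, (dg Es z v <= 1)%N |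
     dg Es z v = 2%N /\ (if (a v <= Kf Es z v)%N then \sum_(E in Fr Es z | v \in E) d E <= 0
                         else 0 <= \sum_(E in Fr Es z | v \in E) d E)]) ->
  exists z' : {set V} -> R, [/\ Fr Es z' \proper Fr Es z,
     forall E, E \in Es -> 0 <= z' E <= 1 &
     forall v, (a v)%:R <= Ssum Es z' v <= (a v)%:R + 1].
Proof.
move=> hz ha hd hnz hrow.
have [t [ht hz' [Es1 hEs1 hint]]] := move_lemma hz hd hnz.
pose z' := fun E => z E + t * d E.
have hag : forall E, E \notin Fr Es z -> z' E = z E.
  by move=> E hE; rewrite /z' hd // mulr0 addr0.
have hS : forall v, Ssum Es z' v = Ssum Es z v + t * \sum_(E in Fr Es z | v \in E) d E.
  move=> v; rewrite /Ssum /z' big_split /= -mulr_sumr; congr (_ + _ * _).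
  exact: sum_supp.
exists z'; split => //.
- apply/properP; split.
    apply/subsetP => E; rewrite /Fr !inE => /andP [hE hE'].
    rewrite hE /=; apply: contraTT hE' => hn.
    by rewrite -/(z' E) hag ?inE ?hE // negb_and hE.
  exists Es1 => //; rewrite /Fr inE negb_and; apply/orP; right.
  by case/orP: hint => /eqP; rewrite -/(z' Es1) => ->; rewrite ?ltxx ?lt01 ?andbF.
- move=> v; apply: (vertex_ok hz hz' hag (ha v)).
  case: (hrow v) => [h|h|[h hs]]; [apply: Or31| apply: Or32 | apply: Or33].
  + by rewrite hS h mulr0 addr0.
  + exact: h.
  + split=> //; rewrite hS; case: ifP hs => _ hs.
      by rewrite gerDl; apply: mulr_ge0_le0 => //; exact: ltW.
    by rewrite lerDl; apply: mulr_ge0 => //; exact: ltW.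
Qed.

Lemma dg_sum (R : realFieldType) (V : finType) (Es : {set {set V}})
  (hE : forall E, E \in Es -> (#|E| <= 2)%N) (z : {set V} -> R) :
  (\sum_v dg Es z v <= 2 * #|Fr Es z|)%N.
Proof.
rewrite /dg.
under eq_bigr => v _ do rewrite big_mkcondr /=.
rewrite exchange_big /= mulnC -sum_nat_const.
apply: leq_sum => E hE'.
rewrite -big_mkcond /= sum1_card.
by apply: hE; move: hE'; rewrite /Fr inE => /andP [].
Qed.

Lemma sum_sub (V : finType) (D : {set V}) (f : V -> nat) :
  (\sum_(v in D) f v <= \sum_v f v)%N.
Proof. by rewrite [X in (_ <= X)%N](bigID (mem D)) /= leq_addr. Qed.

Lemma step (R : realFieldType) (V : finType) (Es : {set {set V}})
  (hE : forall E, E \in Es -> (#|E| <= 2)%N) (z : {set V} -> R) (a : V -> nat) :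
  (forall E, E \in Es -> 0 <= z E <= 1) ->
  (forall v, (a v)%:R <= Ssum Es z v <= (a v)%:R + 1) ->
  Fr Es z != set0 ->
  exists z' : {set V} -> R, [/\ Fr Es z' \proper Fr Es z,
     forall E, E \in Es -> 0 <= z' E <= 1 &
     forall v, (a v)%:R <= Ssum Es z' v <= (a v)%:R + 1].
Proof.
move=> hz ha hne.
have hcnt := dg_sum hE z.
have hF0 : (0 < #|Fr Es z|)%N by rewrite card_gt0.
pose D2 := [set v | (1 < dg Es z v)%N].
have hker : forall (rows : {set V}), (#|rows| < #|Fr Es z|)%N ->
    exists d : {set V} -> R, [/\ forall E, E \notin Fr Es z -> d E = 0,
      exists2 E, E \in Fr Es z & d E != 0 &
      forall v, v \in rows -> \sum_(E in Fr Es z | v \in E) d E = 0].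
  move=> rows hr; have [u [u1 u2 u3]] := kernel_vec (fun (E : {set V}) (v : V) => (v \in E)%:R : R) hr.
  exists u; split=> // v hv.
  transitivity (\sum_(E in Fr Es z) u E * (v \in E)%:R); last exact: u3.
  rewrite big_mkcondr /=.
  by apply: eq_bigr => E _; case: (v \in E); rewrite ?mulr1 ?mulr0.
have hD2 : (2 * #|D2| <= \sum_(v in D2) dg Es z v)%N.
  rewrite mulnC -sum_nat_const; apply: leq_sum => v; by rewrite inE.
have hsub := sum_sub D2 (dg Es z).
set S1 := \sum_(v in D2) dg Es z v in hD2 hsub *.
set S2 := \sum_v dg Es z v in hcnt hsub.
set nF := #|Fr Es z| in hcnt hF0 hker *.
case: (ltnP #|D2| #|Fr Es z|) => hlt.
- have {}hlt : (#|D2| < nF)%N := hlt.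
  have [d [d1 d2 d3]] := hker D2 hlt.
  apply: (finish hz ha d1 d2) => v.
  case: (boolP (v \in D2)) => hv; [apply: Or31; exact: d3 | apply: Or32].
  by move: hv; rewrite inE -leqNgt.
- have {}hlt : (nF <= #|D2|)%N := hlt.
  have [v0 hv0] : exists v0, (v0 \in D2) && (dg Es z v0 == 2%N).
    apply/existsP; apply: contraTT hF0 => /existsPn H.
    have h3 : (3 * #|D2| <= S1)%N.
      rewrite /S1 mulnC -sum_nat_const; apply: leq_sum => v hv.
      have := H v; rewrite hv /= => hn; move: hv; rewrite inE => hv.
      by rewrite ltn_neqAle eq_sym hn hv.
    rewrite -leqNgt; lia.
  case/andP: hv0 => hv0D /eqP hv02.
  have hr : (#|D2 :\ v0| < nF)%N.
    have := cardsD1 v0 D2; rewrite hv0D /=; lia.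
  have [d [d1 d2 d3]] := hker _ hr.
  pose s0 := \sum_(E in Fr Es z | v0 \in E) d E.
  pose c : R := if (a v0 <= Kf Es z v0)%N then (if s0 <= 0 then 1 else -1)
                else (if 0 <= s0 then 1 else -1).
  have hc : c != 0.
    by rewrite /c; do 2 case: ifP => _; rewrite ?oppr_eq0 ?oner_eq0.
  apply: (@finish _ _ _ _ (fun E => c * d E) _ hz ha).
  + by move=> E hE'; rewrite d1 // mulr0.
  + case: d2 => E hE' hdE; exists E => //; by rewrite mulf_neq0.
  + move=> v; rewrite -mulr_sumr.
    case: (eqVneq v v0) => [->|hvv0].
      apply: Or33; split; first exact: hv02.
      rewrite -/s0 /c; case: (leqP (a v0) (Kf Es z v0)) => h1 /=; case: ifP => h2.
      * by rewrite mul1r.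
      * by rewrite mulN1r oppr_le0 ltW // ltNge h2.
      * by rewrite mul1r.
      * by rewrite mulN1r oppr_ge0 ltW // ltNge h2.
    case: (boolP (v \in D2)) => hv.
      by apply: Or31; rewrite d3 ?mulr0 // !inE hvv0 /=; move: hv; rewrite inE.
    by apply: Or32; move: hv; rewrite inE -leqNgt.
Qed.

Lemma base_case (R : realFieldType) (V : finType) (Es : {set {set V}})
  (z : {set V} -> R) (a : V -> nat) :
  Fr Es z = set0 ->
  (forall E, E \in Es -> 0 <= z E <= 1) ->
  (forall v, (a v)%:R <= Ssum Es z v <= (a v)%:R + 1) ->
  exists x : {set V} -> bool, forall v,
    (a v)%:R <= \sum_(E in Es | v \in E) ((x E)%:R : R) <= (a v)%:R + 1.
Proof.
move=> hF hz ha; exists (fun E => z E == 1) => v.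
have -> : \sum_(E in Es | v \in E) ((z E == 1 : nat))%:R = Ssum Es z v.
  rewrite /Ssum; apply: eq_bigr => E /andP [hE _]; symmetry.
  apply: int01 (hz E hE) _.
  have : E \notin Fr Es z by rewrite hF in_set0.
  by rewrite /Fr inE hE.
exact: ha.
Qed.

Lemma genT (R : realFieldType) (V : finType) (Es : {set {set V}})
  (hE : forall E, E \in Es -> (#|E| <= 2)%N) (a : V -> nat) :
  forall n (z : {set V} -> R), (#|Fr Es z| <= n)%N ->
  (forall E, E \in Es -> 0 <= z E <= 1) ->
  (forall v, (a v)%:R <= Ssum Es z v <= (a v)%:R + 1) ->
  exists x : {set V} -> bool, forall v,
    (a v)%:R <= \sum_(E in Es | v \in E) ((x E)%:R : R) <= (a v)%:R + 1.
Proof.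
elim=> [|n IH] z hn hz ha.
  apply: base_case hz ha; apply/eqP; rewrite -cards_eq0; by move: hn; rewrite leqn0.
case: (eqVneq (Fr Es z) set0) => [h|h]; first exact: base_case hz ha.
have [z' [hp hz' ha']] := step hE hz ha h.
apply: IH hz' ha'.
by have := proper_card hp; lia.
Qed.

Lemma floor_ex (R : realFieldType) (s : R) (N : nat) :
  0 <= s -> s < N%:R -> exists n : nat, n%:R <= s < n%:R + 1.
Proof.
move=> h0 hN.
have ex : exists i : nat, (i%:R <= s) by exists 0%N.
have ub : forall i : nat, i%:R <= s -> (i <= N)%N.
  by move=> i hi; apply: ltnW; rewrite -(ltr_nat R); apply: le_lt_trans hN.
case: (ex_maxnP ex ub) => n Pn hmax.
exists n; rewrite Pn /= ltNge; apply/negP => h.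
have h' : (n.+1)%:R <= s by rewrite -natr1.
by have := hmax _ h'; rewrite ltnn.
Qed.

Unset Implicit Arguments.

Theorem lemma4p1 (R : realFieldType) (V : finType) (adj : rel V)
  (hG : simple_graph adj) (z : {set V} -> R)
  (hz : forall E, E \in edges adj -> 0 <= z E <= 1) :
  exists x : {set V} -> bool,
    forall v : V,
      \sum_(E in edges adj | v \in E) z E - 1
        < \sum_(E in edges adj | v \in E) (x E)%:R
      /\ \sum_(E in edges adj | v \in E) (x E)%:R
        <= \sum_(E in edges adj | v \in E) z E + 1.
Proof.
have hE : forall E, E \in edges adj -> (#|E| <= 2)%N.
  move=> E; rewrite inE => /existsP [u /existsP [w /andP [_ /eqP ->]]].
  by rewrite cards2; case: (u != w).
have hb : forall v, exists n : nat, n%:R <= Ssum (edges adj) z v < n%:R + 1.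
  move=> v.
  have hw1 : forall E, (E \in edges adj) && (v \in E) -> 0 <= z E <= 1.
    by move=> E /andP [hE' _]; exact: hz.
  have := sum_weak hw1; case/andP => h0 h1.
  apply: (floor_ex (N := (\big[addn/0%N]_(E | (E \in edges adj) && (v \in E)) 1%N).+1)) => //.
  by rewrite -natr1; apply: le_lt_trans h1 _; rewrite ltrDl ltr01.
case/fin_all_exists: hb => a ha.
have ha' : forall v, (a v)%:R <= Ssum (edges adj) z v <= (a v)%:R + 1.
  by move=> v; case/andP: (ha v) => h1 h2; rewrite h1 ltW.
have [x hx] := genT hE (leqnn _) hz ha'.
exists x => v; have := hx v; have := ha v; rewrite /Ssum.
move=> /andP [h1 h2] /andP [h3 h4]; split; lra.
Qed.
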